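(* Let $\mathcal S=(s_\alpha)_{\alpha\in L(\omega_1)}$ be a ladder system on $\omega_1$ and let $K_{\mathcal S}=\omega_1\cup\{\infty\}$ be the associated ladder system space. Let $\phi:K_{\mathcal S}\to K_{\mathcal S}$ be a continuous map with $\phi(\infty)=\infty$. Then there exists a closed unbounded set $F\subset\omega_1$ such that for every $\alpha\in F$, either $\phi(\alpha)=\alpha$ or $\phi(\alpha)=\infty$.
   Context: $L(\omega_1)$ denotes the set of limit ordinals in $\omega_1$ (the first uncountable ordinal) and $S(\omega_1)=\omega_1\setminus L(\omega_1)$. A ladder system on $\omega_1$ is a family $\mathcal S=(s_\alpha)_{\alpha\in L(\omega_1)}$ where for each limit $\alpha$, $s_\alpha=\{s^n_\alpha:n\in\omega\}$ and $(s^n_\alpha)_{n\in\omega}$ is a strictly increasing sequence in $S(\omega_1)$ converging (in the order sense) to $\alpha$. The ladder system topology $\tau_{\mathcal S}$ on $\omega_1$ is the topology in which every element of $S(\omega_1)$ is isolated and the basic neighborhoods of a limit ordinal $\alpha$ are the sets $\{\alpha\}\cup B$ with $B$ a cofinite subset of $s_\alpha$. This is a locally compact Hausdorff space, and $K_{\mathcal S}=\omega_1\cup\{\infty\}$ is its one-point compactification. ''Club'' means closed (in the order topology) and unbounded in $\omega_1$. *)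

(* Defs.v *)
(* omega_1 is given abstractly as any strictly well-ordered type
   that is uncountable and all of whose proper initial segments are countable;
   this characterizes omega_1 up to order isomorphism. *)
From Stdlib Require Import Arith List.

Record omega1_order (T : Type) (lt : T -> T -> Prop) : Prop := {
  o1_irrefl : forall x, ~ lt x x;
  o1_trans : forall x y z, lt x y -> lt y z -> lt x z;
  o1_total : forall x y, lt x y \/ x = y \/ lt y x;
  o1_wf : well_founded lt;
  o1_uncountable : ~ exists f : T -> nat, forall x y, f x = f y -> x = y;
  o1_segments_countable : forall a, exists f : T -> nat,
      forall x y, lt x a -> lt y a -> f x = f y -> x = y
}.

Section Ladder.
Variables (T : Type) (lt : T -> T -> Prop).

Definition le (x y : T) : Prop := lt x y \/ x = y.

Definition is_limit (a : T) : Prop :=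
  (exists b, lt b a) /\ forall b, lt b a -> exists c, lt b c /\ lt c a.

Definition ladder_system (s : T -> nat -> T) : Prop :=
  forall a, is_limit a ->
    (forall n, lt (s a n) (s a (S n))) /\
    (forall n, ~ is_limit (s a n)) /\
    (forall n, lt (s a n) a) /\
    (forall b, lt b a -> exists n, lt b (s a n)).

Variable s : T -> nat -> T.

(* open sets of the ladder system topology tau_S on T: every limit point of U
   has a basic neighbourhood {a} u B in U, B cofinite in s_a (s_a is
   strictly increasing, so B cofinite in s_a = all but finitely many terms) *)
Definition ladder_open (U : T -> Prop) : Prop :=
  forall a, U a -> is_limit a ->
    exists N, forall n, N <= n -> U (s a n).

Definition ladder_closed (C : T -> Prop) : Prop :=
  ladder_open (fun x => ~ C x).

Definition ladder_compact (C : T -> Prop) : Prop :=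
  forall (I : Type) (V : I -> T -> Prop),
    (forall i, ladder_open (V i)) ->
    (forall x, C x -> exists i, V i x) ->
    exists l : list I, forall x, C x -> exists i, In i l /\ V i x.

(* K_S = T + {oo}, with None = oo; open sets of the one-point
   compactification *)
Definition K_open (W : option T -> Prop) : Prop :=
  ladder_open (fun x => W (Some x)) /\
  (W None -> ladder_closed (fun x => ~ W (Some x)) /\
             ladder_compact (fun x => ~ W (Some x))).

Definition K_continuous (phi : option T -> option T) : Prop :=
  forall W, K_open W -> K_open (fun x => W (phi x)).

Definition order_closed (F : T -> Prop) : Prop :=
  forall a, is_limit a ->
    (forall b, lt b a -> exists c, F c /\ lt b c /\ lt c a) -> F a.

Definition unbounded (F : T -> Prop) : Prop :=
  forall b, exists c, F c /\ le b c.

Definition club (F : T -> Prop) : Prop := order_closed F /\ unbounded F.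

End Ladder.

(* Main.v *)
Require Import Defs.
From Stdlib Require Import Arith List.
From Stdlib Require Import Classical IndefiniteDescription Cantor.

Lemma my_choice {A B : Type} (R : A -> B -> Prop) :
  (forall a, exists b, R a b) -> exists f : A -> B, forall a, R a (f a).
Proof.
  intros H. exists (fun a => proj1_sig (constructive_indefinite_description _ (H a))).
  intro a. exact (proj2_sig (constructive_indefinite_description _ (H a))).
Qed.

Lemma le_lt_trans {T} {lt : T -> T -> Prop} (Ho : omega1_order T lt) x y z :
  le T lt x y -> lt y z -> lt x z.
Proof. intros [H|H] H2; [eapply o1_trans; eauto | subst; auto]. Qed.

Lemma lt_le_trans {T} {lt : T -> T -> Prop} (Ho : omega1_order T lt) x y z :
  lt x y -> le T lt y z -> lt x z.
Proof. intros H [H2|H2]; [eapply o1_trans; eauto | subst; auto]. Qed.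

Lemma not_lt_le {T} {lt : T -> T -> Prop} (Ho : omega1_order T lt) x y :
  ~ lt x y -> le T lt y x.
Proof.
  intros H. destruct (o1_total _ _ Ho x y) as [H1|[H1|H1]];
  [contradiction | right; auto | left; auto].
Qed.

Lemma has_max {T} {lt : T -> T -> Prop} (Ho : omega1_order T lt) x y :
  exists m, le T lt x m /\ le T lt y m.
Proof.
  destruct (o1_total _ _ Ho x y) as [H1|[H1|H1]].
  - exists y; split; [left|right]; auto.
  - exists y; split; right; auto.
  - exists x; split; [right|left]; auto.
Qed.

Lemma no_max {T} {lt : T -> T -> Prop} (Ho : omega1_order T lt) b :
  exists c, lt b c.
Proof.
  apply NNPP; intro H.
  apply (o1_uncountable _ _ Ho).
  destruct (o1_segments_countable _ _ Ho b) as [f Hf].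
  assert (Hg : exists g : T -> nat, forall x,
     (x = b /\ g x = 0) \/ (x <> b /\ g x = S (f x))).
  { apply (my_choice (fun x n => (x = b /\ n = 0) \/ (x <> b /\ n = S (f x)))).
    intro x. destruct (classic (x = b)); eauto. }
  destruct Hg as [g Hg]. exists g. intros x y Hxy.
  assert (Hlt : forall z, z <> b -> lt z b).
  { intros z Hz. destruct (o1_total _ _ Ho z b) as [?|[?|?]]; auto; [congruence|].
    exfalso; apply H; eauto. }
  destruct (Hg x) as [[? E1]|[N1 E1]]; destruct (Hg y) as [[? E2]|[N2 E2]];
    try congruence.
  rewrite E1, E2 in Hxy. injection Hxy; intro. apply Hf; auto.
Qed.

Lemma bound_countable {T} {lt : T -> T -> Prop} (Ho : omega1_order T lt)
  (I : Type) (P : I -> Prop) (fI : I -> nat)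
  (HfI : forall i j, P i -> P j -> fI i = fI j -> i = j) (h : I -> T) :
  exists e, forall i, P i -> lt (h i) e.
Proof.
  apply NNPP; intro H.
  assert (H1 : forall e, exists i, P i /\ ~ lt (h i) e).
  { intro e. apply NNPP; intro H2. apply H. exists e. intros i Pi.
    apply NNPP; intro H3. apply H2; eauto. }
  destruct (my_choice _ H1) as [ie Hie].
  assert (H3 : forall i, exists k : T -> nat, exists d, lt (h i) d /\
      forall x y, lt x d -> lt y d -> k x = k y -> x = y).
  { intro i. destruct (no_max Ho (h i)) as [d Hd].
    destruct (o1_segments_countable _ _ Ho d) as [k Hk]. eauto. }
  destruct (my_choice _ H3) as [K HK].
  apply (o1_uncountable _ _ Ho).
  exists (fun e => to_nat (fI (ie e), K (ie e) e)).
  intros x y Hxy. apply (f_equal of_nat) in Hxy.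
  rewrite !cancel_of_to in Hxy. injection Hxy; intros E2 E1.
  destruct (Hie x) as [Px Nx]. destruct (Hie y) as [Py Ny].
  assert (Eq : ie x = ie y) by (apply HfI; auto).
  rewrite Eq in E2. destruct (HK (ie y)) as [d [Hd Hk]].
  apply (Hk x y); auto.
  - apply (le_lt_trans Ho _ (h (ie y))); auto. rewrite <- Eq. apply not_lt_le; auto.
  - apply (le_lt_trans Ho _ (h (ie y))); auto. apply not_lt_le; auto.
Qed.

Lemma least {T} {lt : T -> T -> Prop} (Ho : omega1_order T lt) (P : T -> Prop) x :
  P x -> exists m, P m /\ forall y, P y -> le T lt m y.
Proof.
  intros Px.
  assert (H : exists m, P m /\ forall y, P y -> ~ lt y m).
  { apply NNPP; intro H.
    assert (forall z, ~ P z).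
    { intro z. induction z as [z IH] using (well_founded_ind (o1_wf _ _ Ho)).
      intro Pz. apply H. exists z. split; auto. intros y Py Hy. exact (IH y Hy Py). }
    exact (H0 x Px). }
  destruct H as [m [Pm Hm]]. exists m. split; auto. intros y Py.
  apply not_lt_le; auto.
Qed.

Lemma list_bound {T} {lt : T -> T -> Prop} (Ho : omega1_order T lt) (t0 : T)
  (l : list T) : exists e, forall i, In i l -> le T lt i e.
Proof.
  induction l as [|x l [e IH]].
  - exists t0. intros i [].
  - destruct (has_max Ho x e) as [m [H1 H2]]. exists m. intros i [Hi|Hi].
    + subst; auto.
    + destruct (IH i Hi) as [H|H]; [left; eapply lt_le_trans; eauto | subst; auto].
Qed.

Lemma mono {T} {lt : T -> T -> Prop} (Ho : omega1_order T lt) (u : nat -> T) :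
  (forall n, lt (u n) (u (S n))) -> forall n m, n <= m -> le T lt (u n) (u m).
Proof.
  intros Hu n m Hnm. induction Hnm.
  - right; auto.
  - left. eapply le_lt_trans; eauto.
Qed.

Theorem proposition1 (T : Type) (lt : T -> T -> Prop)
  (Ho : omega1_order T lt) (s : T -> nat -> T)
  (Hs : ladder_system T lt s) (phi : option T -> option T)
  (Hphi : K_continuous T lt s phi) (Hinf : phi None = None) :
  exists F : T -> Prop, club T lt F /\
    forall a, F a -> phi (Some a) = Some a \/ phi (Some a) = None.
Proof.
  assert (Hne : exists t : T, True).
  { apply NNPP; intro H. apply (o1_uncountable _ _ Ho). exists (fun _ => 0).
    intros x; exfalso; apply H; eauto. }
  destruct Hne as [t0 _].
  assert (Hirr := o1_irrefl _ _ Ho).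
  assert (Htr := o1_trans _ _ Ho).
  assert (Hcb : forall C, ladder_compact T lt s C -> exists e, forall x, C x -> lt x e).
  { intros C HC.
    destruct (HC T (fun b x => lt x b)) as [l Hl].
    - intros b a Hab Ha. exists 0. intros n _.
      destruct (Hs a Ha) as [_ [_ [H3 _]]]. eapply Htr; eauto.
    - intros x _. apply (no_max Ho).
    - destruct (list_bound Ho t0 l) as [e He]. exists e. intros x Cx.
      destruct (Hl x Cx) as [i [Hi Hxi]]. eapply (lt_le_trans Ho); eauto. }
  assert (Havoid : forall a g, is_limit T lt a -> a <> g ->
     exists N, forall n, N <= n -> s a n <> g).
  { intros a g Hlim Hag. destruct (Hs a Hlim) as [Hinc [Hnl [Hlt Hcof]]].
    destruct (classic (lt g a)) as [H|H].
    - destruct (Hcof g H) as [N HN]. exists N. intros n Hn E. subst g.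
      apply (Hirr (s a n)). eapply (lt_le_trans Ho); [exact HN|]. apply mono; auto.
    - exists 0. intros n _ E. apply H. rewrite <- E. apply Hlt. }
  assert (Hpre : forall g, exists e, forall z, phi (Some z) = Some g -> lt z e).
  { intro g.
    assert (HW : K_open T lt s (fun y => y <> Some g)).
    { split.
      - intros a Ha Hlim. destruct (Havoid a g Hlim) as [N HN].
        { intro E; apply Ha; subst; auto. }
        exists N. intros n Hn E. injection E; apply HN; auto.
      - intros _. split.
        + intros a Ha Hlim. destruct (Havoid a g Hlim) as [N HN].
          { intro E; apply Ha; subst; auto. }
          exists N. intros n Hn E. apply E. intro E2. injection E2. apply HN; auto.
        + intros I V HV Hcov. destruct (Hcov g) as [i Hi].
          { intro H; apply H; reflexivity. }
          exists (i :: nil). intros x Hx.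
          assert (x = g).
          { apply NNPP; intro H; apply Hx; intro E; injection E; auto. }
          subst x. exists i. split; [left|]; auto. }
    destruct (Hphi _ HW) as [_ H2].
    destruct (H2 ltac:(rewrite Hinf; discriminate)) as [_ Hc].
    destruct (Hcb _ Hc) as [e He]. exists e. intros z Hz. apply He.
    intro H; apply H; auto. }
  assert (Hg0 : forall x, exists e, (forall y, phi (Some x) = Some y -> lt y e) /\
      (forall z, phi (Some z) = Some x -> lt z e)).
  { intro x. destruct (Hpre x) as [e1 He1].
    destruct (phi (Some x)) as [y|] eqn:E.
    - destruct (no_max Ho y) as [e2 He2]. destruct (has_max Ho e1 e2) as [m [M1 M2]].
      exists m. split.
      + intros y' E'. injection E'; intro; subst y'. eapply (lt_le_trans Ho); eauto.
      + intros z Hz. eapply (lt_le_trans Ho); eauto.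
    - exists e1. split; [discriminate | auto]. }
  destruct (my_choice _ Hg0) as [g Hg].
  assert (Hnx0 : forall d, exists e, lt d e /\ forall z, le T lt z d -> lt (g z) e).
  { intro d. destruct (no_max Ho d) as [d' Hd'].
    destruct (o1_segments_countable _ _ Ho d') as [f Hf].
    destruct (bound_countable Ho T (fun z => le T lt z d) f) with (h := g) as [e1 He1].
    { intros i j Hi Hj. apply Hf; eapply (le_lt_trans Ho); eauto. }
    destruct (has_max Ho e1 d) as [m [M1 M2]].
    destruct (no_max Ho m) as [e He]. exists e. split.
    - eapply (le_lt_trans Ho); eauto.
    - intros z Hz. eapply Htr; [apply He1; auto|]. eapply (le_lt_trans Ho); eauto. }
  destruct (my_choice _ Hnx0) as [nx Hnx].
  exists (fun a => is_limit T lt a /\ forall x, lt x a -> lt (g x) a).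
  split; [split|].
  - intros a Ha Hc. split; auto. intros x Hx.
    destruct (Hc x Hx) as [c [[_ Fc] [Hxc Hca]]]. eapply Htr; [apply Fc; auto | auto].
  - intro b. set (u := fun n => Nat.iter n nx b).
    assert (Hu : forall n, lt (u n) (u (S n)) /\
       forall z, le T lt z (u n) -> lt (g z) (u (S n))).
    { intro n. exact (Hnx (u n)). }
    destruct (bound_countable Ho nat (fun _ => True) (fun n => n)) with (h := u)
      as [e0 He0].
    { auto. }
    destruct (least Ho (fun c => forall n, lt (u n) c) e0) as [c [Hc Hmin]].
    { intro n; apply He0; auto. }
    assert (Hbelow : forall y, lt y c -> exists n, le T lt y (u n)).
    { intros y Hy. apply NNPP; intro H.
      assert (forall n, lt (u n) y).
      { intro n. destruct (o1_total _ _ Ho (u n) y) as [?|[?|?]]; auto;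
        exfalso; apply H; exists n; [right|left]; auto. }
      apply (Hirr c). eapply (le_lt_trans Ho); [apply Hmin; exact H0 | exact Hy]. }
    exists c. split; [split; [split|]|].
    + exists (u 0). apply Hc.
    + intros y Hy. destruct (Hbelow y Hy) as [n Hn]. exists (u (S n)). split.
      * eapply (le_lt_trans Ho); [exact Hn | apply Hu].
      * apply Hc.
    + intros x Hx. destruct (Hbelow x Hx) as [n Hn]. eapply Htr; [apply Hu; exact Hn|].
      apply Hc.
    + left. exact (Hc 0).
  - intros a [Hlim Ha]. destruct (phi (Some a)) as [gm|] eqn:E; [left|right; auto].
    destruct (o1_total _ _ Ho gm a) as [H|[H|H]].
    + exfalso. apply (Hirr a). eapply Htr; [apply (proj2 (Hg gm)); exact E|].
      apply Ha; auto.
    + subst; auto.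
    + exfalso.
      set (W := fun y => exists z, y = Some z /\ (z = gm \/
               (is_limit T lt gm /\ lt a z /\ exists n, z = s gm n))).
      assert (HW : K_open T lt s W).
      { split.
        - intros x [z [Ez Hz]] Hx. injection Ez; intro; subst z.
          destruct Hz as [Hz|[Hgl [Haz [n Hn]]]].
          + subst x. destruct (Hs gm Hx) as [Hinc [Hnl [Hlt Hcof]]].
            destruct (Hcof a H) as [N HN]. exists N. intros n Hn.
            exists (s gm n). split; auto. right. split; auto. split; eauto.
            eapply (lt_le_trans Ho); [exact HN | apply mono; auto].
          + exfalso. subst x. apply (proj1 (proj2 (Hs gm Hgl)) n); auto.
        - intros [z [Ez _]]; discriminate. }
      destruct (Hphi W HW) as [Hop _].
      destruct (Hop a) as [N HN]; auto.
      { exists gm. split; auto. }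
      destruct (HN N (le_n N)) as [z [Ez Hz]].
      assert (Hza : lt z a).
      { eapply Htr; [apply (proj1 (Hg (s a N))); exact Ez|].
        apply Ha. apply (Hs a Hlim). }
      destruct Hz as [Hz|[_ [Haz _]]].
      * subst z. apply (Hirr a); eauto.
      * apply (Hirr a); eauto.
Qed.
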